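(* Let $a>0$ and $0<h\le\frac{1}{3a}$, and let $\alpha_1$ be the smallest positive solution $q$ of $\tan(hq)=\frac{2aq}{q^2-a^2}$. Define, for $z,w\in[0,h]$ and $t>s$, $$P_1(z,t,w,s)=\frac{2e^{-\alpha_1^2(t-s)}[\alpha_1\cos(\alpha_1 z)+a\sin(\alpha_1 z)][\alpha_1\cos(\alpha_1 w)+a\sin(\alpha_1 w)]}{2a+h(a^2+\alpha_1^2)}.$$ Then for all $0\le z,w\le h$ and $t>s$, $$\left|P_1(z,t,w,s)-\frac{\alpha_1^2}{2a}e^{-\alpha_1^2(t-s)}\right|\le\frac52\,h\alpha_1^2e^{-\alpha_1^2(t-s)}.$$ *)

(* Defs.v *)
From Stdlib Require Export Reals.
Open Scope R_scope.

(* q is a (genuine) solution of tan(h q) = 2 a q / (q^2 - a^2):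
   both sides are defined (cos(hq) <> 0, q^2 <> a^2) and they are equal. *)
Definition is_eigen_sol (a h q : R) : Prop :=
  cos (h * q) <> 0 /\ q ^ 2 - a ^ 2 <> 0 /\
  tan (h * q) = 2 * a * q / (q ^ 2 - a ^ 2).

Definition smallest_pos_sol (a h alpha1 : R) : Prop :=
  0 < alpha1 /\ is_eigen_sol a h alpha1 /\
  (forall q, 0 < q -> is_eigen_sol a h q -> alpha1 <= q).

Definition P1 (a h alpha1 z t w s : R) : R :=
  2 * exp (- alpha1 ^ 2 * (t - s))
    * (alpha1 * cos (alpha1 * z) + a * sin (alpha1 * z))
    * (alpha1 * cos (alpha1 * w) + a * sin (alpha1 * w))
  / (2 * a + h * (a ^ 2 + alpha1 ^ 2)).

(* Main.v *)
Require Import Defs.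
From Stdlib Require Import Reals Lra Psatz.
Open Scope R_scope.
Lemma core b x Gu Gv : 0 < b -> b <= 1/3 -> 0 < x -> x^2 <= 2*b+b^2 -> b*(2+b) <= x^2*(1+b) ->
  x*(1-x^2/2) <= Gu <= x*(1+b) -> x*(1-x^2/2) <= Gv <= x*(1+b) ->
  Rabs (2*Gu*Gv/(2*b+b^2+x^2) - x^2/(2*b)) <= 5/2*x^2.
Proof.
intros hb hb3 hx hxu hxl [Hu1 Hu2] [Hv1 Hv2].
assert (hc : 0 <= 1 - x^2/2) by nra.
set (y := x^2) in *.
assert (hy : y = x*x) by (unfold y; ring).
assert (N1 : x*(1-y/2)*(x*(1-y/2)) <= Gu*Gv).
{ apply Rmult_le_compat; nra. }
assert (N2 : Gu*Gv <= x*(1+b)*(x*(1+b))).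
{ apply Rmult_le_compat; nra. }
assert (HD : 0 < 2*b+b^2+y) by nra.
apply Rabs_le; split.
- destruct (Rle_dec (1 - 5*b) 0) as [Hneg|Hpos].
  + assert (0 <= 2*Gu*Gv/(2*b+b^2+y)).
    { unfold Rdiv; apply Rmult_le_pos; [nra| left; apply Rinv_0_lt_compat; lra]. }
    assert (x^2/(2*b) <= 5/2*y).
    { apply Rmult_le_reg_r with (2*b). lra. field_simplify; try lra. unfold y in *. nra. }
    unfold y in *; lra.
  + assert (key : (1 - 5*b)*y*(2*b+b^2+y) <= 4*b*(Gu*Gv)).
    { assert (K: (1-5*b)*(2*b+b^2+y) <= 4*b*(1-y/2)*(1-y/2)).
      { assert (K2: 2*(1-(2*b+b^2)/2)^2 >= (1-5*b)*(2+b)) by nra. nra. }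
      nra. }
    assert (E : 2*Gu*Gv/(2*b+b^2+y) - y/(2*b) = (4*b*(Gu*Gv) - y*(2*b+b^2+y))/(2*b*(2*b+b^2+y))) by (field; lra).
    rewrite E.
    apply (Rmult_le_reg_r (2*b*(2*b+b^2+y))). nra.
    replace ((4*b*(Gu*Gv) - y*(2*b+b^2+y))/(2*b*(2*b+b^2+y))*(2*b*(2*b+b^2+y))) with (4*b*(Gu*Gv) - y*(2*b+b^2+y)) by (field; nra). nra.
- assert (key : 4*b*(Gu*Gv) <= (1 + 5*b)*y*(2*b+b^2+y)).
  { assert (K: 4*b*(1+b)*(1+b) <= (1+5*b)*(2*b+b^2+y)).
    { assert (K3 : 4*(1+b)^3 <= (1+5*b)*(2+b)^2) by nra.
      assert (K4: b*(2+b)/(1+b) <= y). { apply Rmult_le_reg_r with (1+b). lra. field_simplify; lra. }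
      assert (K5: b*(2+b)*(2+b)/(1+b) <= 2*b+b^2+y). { replace (b*(2+b)*(2+b)/(1+b)) with (b*(2+b) + b*(2+b)/(1+b)) by (field; lra). lra. }
      apply Rmult_le_reg_r with (1+b). lra.
      apply Rle_trans with ((1+5*b)*(b*(2+b)*(2+b)/(1+b))*(1+b)).
      - replace ((1+5*b)*(b*(2+b)*(2+b)/(1+b))*(1+b)) with (b*((1+5*b)*(2+b)^2)) by (field; lra). nra.
      - apply Rmult_le_compat_r. lra. apply Rmult_le_compat_l; lra. }
    nra. }
  assert (E : 2*Gu*Gv/(2*b+b^2+y) - y/(2*b) = (4*b*(Gu*Gv) - y*(2*b+b^2+y))/(2*b*(2*b+b^2+y))) by (field; lra).
  rewrite E.
  apply (Rmult_le_reg_r (2*b*(2*b+b^2+y))). nra.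
  replace ((4*b*(Gu*Gv) - y*(2*b+b^2+y))/(2*b*(2*b+b^2+y))*(2*b*(2*b+b^2+y))) with (4*b*(Gu*Gv) - y*(2*b+b^2+y)) by (field; nra). nra.
Qed.
Lemma sin_bnds x : 0 <= x -> x <= PI -> x - x^3/6 <= sin x <= x - x^3/6 + x^5/120.
Proof. intros H1 H2. pose proof (sin_bound x 0 H1 H2) as H.
 unfold sin_approx, sin_term in H. simpl in H. lra. Qed.
Lemma cos_bnds x : - PI/2 <= x -> x <= PI/2 -> 1 - x^2/2 <= cos x <= 1 - x^2/2 + x^4/24.
Proof. intros H1 H2. pose proof (cos_bound x 0 H1 H2) as H.
 unfold cos_approx, cos_term in H. simpl in H. lra. Qed.

Theorem lemma3p4 (a h alpha1 : R) :
  0 < a -> 0 < h -> h <= 1 / (3 * a) ->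
  smallest_pos_sol a h alpha1 ->
  forall z w t s : R,
    0 <= z <= h -> 0 <= w <= h -> s < t ->
    Rabs (P1 a h alpha1 z t w s
          - alpha1 ^ 2 / (2 * a) * exp (- alpha1 ^ 2 * (t - s)))
    <= 5 / 2 * h * alpha1 ^ 2 * exp (- alpha1 ^ 2 * (t - s)).
Proof.
intros ha hh hh3 [hal [[hc [hq htan]] hmin]] z w t s hz hw hst.
assert (hb3 : h * a <= 1/3).
{ apply Rmult_le_reg_r with (/a). apply Rinv_0_lt_compat; lra.
  replace (h*a*/a) with h by (field; lra). replace (1/3*/a) with (1/(3*a)) by (field; lra). lra. }
pose proof PI2_1 as hpi.
assert (h1 : a < alpha1).
{ destruct (Rtotal_order a alpha1) as [H|[H|H]]; [exact H| subst; exfalso; apply hq; ring|].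
  exfalso. assert (0 < h*alpha1 < PI/2) by nra.
  assert (0 < tan (h*alpha1)) by (apply tan_gt_0; lra).
  assert (2*a*alpha1/(alpha1^2-a^2) < 0).
  { unfold Rdiv. rewrite <- (Rmult_0_r (2*a*alpha1)). apply Rmult_lt_compat_l. nra.
    apply Rinv_lt_0_compat. nra. }
  lra. }
assert (h2 : h*alpha1 < PI/2).
{ destruct (Rlt_le_dec (h*alpha1) (PI/2)) as [H|H]; [exact H|exfalso].
  set (f := fun q => sin (h*q)*(q^2-a^2) - 2*a*q*cos (h*q)).
  assert (cf : continuity f). { unfold f. reg. }
  assert (hab : a < PI/(2*h)).
  { apply Rmult_lt_reg_r with h. lra. replace (PI/(2*h)*h) with (PI/2) by (field; lra). nra. }
  assert (fa : f a < 0).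
  { unfold f. replace (a^2-a^2) with 0 by ring.
    assert (0 < h*a) by nra. assert (0 < cos (h*a)) by (apply cos_gt_0; lra). assert (0 < a*a*cos(h*a)) by (apply Rmult_lt_0_compat; nra). lra. }
  assert (fb : 0 < f (PI/(2*h))).
  { unfold f. replace (h*(PI/(2*h))) with (PI/2) by (field; lra).
    rewrite sin_PI2, cos_PI2. nra. }
  destruct (IVT f a (PI/(2*h)) cf hab fa fb) as [q [[hq1 hq2] hfq]].
  assert (q <> a). { intro E; subst q; lra. }
  assert (q <> PI/(2*h)). { intro E; subst q; lra. }
  assert (hqa : a < q) by lra.
  assert (hq3 : 0 < h*q < PI/2).
  { split. nra. apply Rmult_lt_reg_r with (/h). apply Rinv_0_lt_compat; lra.
    replace (h*q*/h) with q by (field; lra). replace (PI/2*/h) with (PI/(2*h)) by (field; lra). lra. }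
  assert (cq : 0 < cos (h*q)) by (apply cos_gt_0; lra).
  assert (hs : is_eigen_sol a h q).
  { unfold is_eigen_sol. assert (q^2-a^2 <> 0) by (intro; nra). split; [lra|split; [assumption|]].
    unfold tan. unfold f in hfq. field_simplify_eq; [lra| split; lra]. }
  pose proof (hmin q ltac:(lra) hs). nra. }
set (b := h*a). set (x := h*alpha1).
assert (hb : 0 < b) by (unfold b; nra).
assert (hxb : b < x) by (unfold b, x; nra).
assert (hx : 0 < x) by lra.
assert (h2x : x < PI/2) by (unfold x; lra).
assert (cx : 0 < cos x) by (apply cos_gt_0; lra).
assert (eq0 : sin x * (alpha1^2 - a^2) = 2*a*alpha1*cos x).
{ unfold tan in htan. fold x in htan.
  apply (Rmult_eq_reg_r (/ cos x)); [|apply Rinv_neq_0_compat; lra].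
  replace (sin x * (alpha1 ^ 2 - a ^ 2) * / cos x) with (sin x / cos x * (alpha1^2-a^2)) by (field; lra).
  rewrite htan. field. split; lra. }
assert (eq1 : sin x * (x^2 - b^2) = 2*b*x*cos x).
{ unfold x, b. replace (sin (h*alpha1) * ((h*alpha1)^2 - (h*a)^2)) with (h^2 * (sin x * (alpha1^2 - a^2))) by (unfold x; ring).
  rewrite eq0. unfold x; ring. }
assert (hpi2 : PI/2 <= 2). { pose proof PI_4. lra. }
destruct (sin_bnds x ltac:(lra) ltac:(lra)) as [sl su].
destruct (cos_bnds x ltac:(lra) ltac:(lra)) as [cl cu].
assert (sx : sin x <= x) by nra.
assert (xcs : x * cos x <= sin x).
{ assert (x*cos x <= x*(1 - x^2/2 + x^4/24)) by (apply Rmult_le_compat_l; lra). nra. }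
assert (xu : x^2 <= 2*b + b^2).
{ assert (x*cos x*(x^2-b^2) <= 2*b*x*cos x) by (rewrite <- eq1; apply Rmult_le_compat_r; nra).
  assert (x^2 - b^2 <= 2*b).
  { apply Rmult_le_reg_r with (x*cos x). nra. nra. }
  lra. }
assert (xl : b*(2+b) <= x^2*(1+b)).
{ assert (sin x*(x^2-b^2) <= x*(x^2-b^2)) by (apply Rmult_le_compat_r; nra).
  assert (2*b*x*(1-x^2/2) <= 2*b*x*cos x) by (apply Rmult_le_compat_l; nra).
  assert (2*b*(1-x^2/2) <= x^2-b^2).
  { apply Rmult_le_reg_r with x. lra. nra. }
  nra. }
assert (hb13 : b <= 1/3) by (unfold b; lra).
assert (Gb : forall u, 0 <= u <= x -> x*(1-x^2/2) <= x*cos u + b*sin u <= x*(1+b)).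
{ intros u [u0 u1].
  destruct (sin_bnds u ltac:(lra) ltac:(lra)) as [sl' su'].
  destruct (cos_bnds u ltac:(lra) ltac:(lra)) as [cl' cu'].
  assert (sin u <= u) by nra.
  assert (0 <= sin u) by (apply sin_ge_0; lra).
  pose proof (COS_bound u).
  assert (1 - x^2/2 <= cos u) by nra.
  split; nra. }
assert (hu : 0 <= alpha1*z <= x) by (unfold x; split; nra).
assert (hv : 0 <= alpha1*w <= x) by (unfold x; split; nra).
pose proof (core b x _ _ hb hb13 hx xu xl (Gb _ hu) (Gb _ hv)) as C.
set (E := exp (- alpha1 ^ 2 * (t - s))).
assert (hE : 0 < E) by apply exp_pos.
assert (HD : 0 < 2 * a + h * (a ^ 2 + alpha1 ^ 2)) by nra.
assert (HD' : 0 < 2*b+b^2+x^2) by nra.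
replace (P1 a h alpha1 z t w s - alpha1 ^ 2 / (2 * a) * E) with
  (E / h * (2 * (x * cos (alpha1 * z) + b * sin (alpha1 * z)) *
     (x * cos (alpha1 * w) + b * sin (alpha1 * w)) / (2 * b + b ^ 2 + x ^ 2) - x ^ 2 / (2 * b))).
2:{ unfold P1. fold E. unfold x, b. field. split; [|split]; try lra. unfold x, b in HD'. lra. }
rewrite Rabs_mult. rewrite (Rabs_pos_eq (E/h)) by (unfold Rdiv; apply Rmult_le_pos; [lra|left; apply Rinv_0_lt_compat; lra]).
apply Rle_trans with (E/h * (5/2*x^2)).
- apply Rmult_le_compat_l. unfold Rdiv; apply Rmult_le_pos; [lra|left; apply Rinv_0_lt_compat; lra]. exact C.
- right. unfold x. field. lra.
Qed.
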